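(* Let $V$ be a finite nonempty set, $c\in\mathbb{R}^{P_V}$, $\hat x$ a maximally specific partial function on $P_V$, $U\subseteq V$, $\hat x'=\hat x|_{P_U}$, $c'=c|_{P_U}$, $ij\in P_U\setminus\operatorname{dom}(\hat x)$, $b\in\{0,1\}$, and $y\in\operatorname{argmax}\{\varphi_{c'}(x')\mid x'\in X_U[\hat x'],\ x'_{ij}=b\}$. Let $\tau\colon X_V[\hat x]\to X_V[\hat x]$ be a map such that $\tau(x)|_{P_{V\setminus U}}=x|_{P_{V\setminus U}}$ and $\tau(x)|_{P_U}=y$ for every $x\in X_V[\hat x]$. Let $\mathrm{lb},\mathrm{ub},\mathrm{ub}'\in\mathbb{R}$ satisfy $\mathrm{lb}\le\max\{\varphi_{c'}(x)\mid x\in X_U[\hat x'],\ x_{ij}=b\}$, $\mathrm{ub}\ge\max\{\varphi_{c'}(x)\mid x\in X_U[\hat x'],\ x_{ij}=1-b\}$, and $\mathrm{ub}'\ge\max\{\sum_{pq\in\delta(U)}c_{pq}(x_{pq}-\tau(x)_{pq})\mid x\in X_V[\hat x],\ x_{ij}=1-b\}$. If $\mathrm{lb}-\mathrm{ub}\ge\mathrm{ub}'$, then there is a maximizer $x^*$ of $\varphi_c$ over $X_V[\hat x]$ with $x^*_{ij}=b$.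
   Context: For a finite set $W$, $P_W=\{pq\in W^2\mid p\neq q\}$ and $X_W$ is the set of $x\in\{0,1\}^{P_W}$ with $x_{pq}+x_{qr}-x_{pr}\le 1$ for all pairwise distinct $p,q,r\in W$; $\varphi_c(x)=\sum_{pq\in P_W}c_{pq}x_{pq}$ for $c\in\mathbb{R}^{P_W}$. A partial function $\tilde x$ on $P_W$ is a map from $\operatorname{dom}(\tilde x)\subseteq P_W$ to $\{0,1\}$, and $X_W[\tilde x]=\{x\in X_W\mid x_{pq}=\tilde x_{pq}\ \forall pq\in\operatorname{dom}(\tilde x)\}$. A pair $pq$ is decided if $x_{pq}=x'_{pq}$ for all $x,x'\in X_W[\tilde x]$; $\tilde x$ is maximally specific if $X_W[\tilde x]\ne\emptyset$ and the decided pairs are exactly $\operatorname{dom}(\tilde x)$. $\hat x|_{P_U}$ is the partial function on $P_U$ with domain $\operatorname{dom}(\hat x)\cap P_U$ agreeing with $\hat x$; $c|_{P_U}$ and $x|_{P_U}$ are restrictions. $\delta(U)=(U\times(V\setminus U))\cup((V\setminus U)\times U)$. *)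

(* Defs.v *)
From mathcomp Require Import all_boot all_order all_algebra.
Set Implicit Arguments. Unset Strict Implicit. Unset Printing Implicit Defensive.
Import Order.TTheory GRing.Theory Num.Theory.
Local Open Scope ring_scope.

Section Defs.
Variable V : finType.

Definition inPW (W : {set V}) (pq : V * V) : bool :=
  [&& pq.1 \in W, pq.2 \in W & pq.1 != pq.2].
Definition PW (W : {set V}) := {pq : V * V | inPW W pq}.

Definition at_pair T (d : T) (W : {set V}) (f : {ffun PW W -> T}) (p q : V) : T :=
  if @insub _ (inPW W) (PW W) (p, q) is Some pq then f pq else d.

(* restriction f|_{P_U} of f : P_W -> T (meaningful for U \subset W) *)
Definition restr T (d : T) (W U : {set V}) (f : {ffun PW W -> T}) : {ffun PW U -> T} :=
  [ffun pq : PW U => at_pair d f (val pq).1 (val pq).2].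

Definition inX (W : {set V}) (x : {ffun PW W -> bool}) : Prop :=
  forall p q r, p \in W -> q \in W -> r \in W ->
    p != q -> q != r -> p != r ->
    ((at_pair false x p q)%:R + (at_pair false x q r)%:R
       - (at_pair false x p r)%:R <= 1 :> int).

(* X_W[xt] for a partial function xt : P_W -> option bool (dom = Some) *)
Definition inXp (W : {set V}) (xt : {ffun PW W -> option bool})
  (x : {ffun PW W -> bool}) : Prop :=
  inX x /\ forall pq, forall b, xt pq = Some b -> x pq = b.

Definition decided (W : {set V}) (xt : {ffun PW W -> option bool}) (pq : PW W) : Prop :=
  forall x x', inXp xt x -> inXp xt x' -> x pq = x' pq.

Definition max_specific (W : {set V}) (xt : {ffun PW W -> option bool}) : Prop :=
  (exists x, inXp xt x) /\ forall pq, decided xt pq <-> xt pq != None.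

Definition phi (R : realFieldType) (W : {set V}) (c : {ffun PW W -> R})
  (x : {ffun PW W -> bool}) : R :=
  \sum_(pq : PW W) c pq * (x pq)%:R.

End Defs.

(* Main.v *)
Require Import Defs.
From mathcomp Require Import all_boot all_order all_algebra.
From Stdlib Require Import Classical.
From mathcomp Require Import lra.
Import Order.TTheory GRing.Theory Num.Theory.
Local Open Scope ring_scope.

Section Aux.
Variable V : finType.

Lemma sumPW (R : nmodType) (W : {set V}) (P : pred (V * V)) (F : V * V -> R) :
  \sum_(pq : PW W | P (val pq)) F (val pq) = \sum_(pq : V * V | inPW W pq && P pq) F pq.
Proof.
symmetry.
rewrite (reindex_omap (val : PW W -> V * V) insub); last first.
  by move=> i /andP[iA Pi]; rewrite insubT.
by apply: eq_bigl=> -[i iA]/=; rewrite insubT ?iA /= eqxx andbT.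
Qed.

Lemma at_pair_val T (d : T) (W : {set V}) (f : {ffun PW W -> T}) (pq : PW W) :
  at_pair d f (val pq).1 (val pq).2 = f pq.
Proof. by rewrite /at_pair -surjective_pairing valK. Qed.

Lemma at_pair_restr T (d : T) (W U : {set V}) (f : {ffun PW W -> T}) p q :
  inPW U (p, q) -> at_pair d (restr d U f) p q = at_pair d f p q.
Proof. by move=> h; rewrite /at_pair insubT /restr ffunE. Qed.

Lemma inXp_restr (U : {set V}) (xh : {ffun PW [set: V] -> option bool}) x :
  inXp xh x -> inXp (restr None U xh) (restr false U x).
Proof.
move=> [hx hp]; split.
  move=> p q r pU qU rU npq nqr npr.
  rewrite !at_pair_restr; try by rewrite /inPW /= ?pU ?qU ?rU.
  by apply: hx; rewrite ?in_setT.
move=> pq b'; rewrite !ffunE /at_pair.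
by case: insubP => [pq'' _ _ /hp|].
Qed.

Lemma exists_max (R : realDomainType) (T : eqType) (P : T -> Prop) (f : T -> R) (s : seq T) :
  (exists2 x, x \in s & P x) ->
  exists m, P m /\ forall x, x \in s -> P x -> f x <= f m.
Proof.
elim: s => [|a s IH]; first by case.
move=> [x xs Px].
case: (classic (exists2 x, x \in s & P x)) => [/IH [m [Pm hm]]|hn].
  case: (classic (P a)) => Pa.
    case: (leP (f a) (f m)) => h.
      exists m; split=> // z; rewrite inE => /orP[/eqP->|] //; exact: hm.
    exists a; split=> // z; rewrite inE => /orP[/eqP->|zs Pz] //.
    by apply: le_trans (hm _ zs Pz) (ltW h).
  exists m; split=> // z; rewrite inE => /orP[/eqP->|] //; exact: hm.
have Pa : P a.
  move: xs; rewrite inE => /orP[/eqP<-|xs] //; by case: hn; exists x.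
exists a; split=> // z; rewrite inE => /orP[/eqP->|zs Pz] //.
by case: hn; exists z.
Qed.

End Aux.
Theorem proposition6p7 (R : realFieldType) (V : finType) (hV : (0 < #|V|)%N)
  (c : {ffun PW [set: V] -> R})
  (xh : {ffun PW [set: V] -> option bool})
  (hxh : max_specific xh)
  (U : {set V})
  (ij : PW [set: V]) (hiU : (val ij).1 \in U) (hjU : (val ij).2 \in U)
  (hij : xh ij = None)
  (b : bool)
  (y : {ffun PW U -> bool})
  (hy : inXp (restr None U xh) y /\ at_pair false y (val ij).1 (val ij).2 = b /\
        forall x', inXp (restr None U xh) x' -> at_pair false x' (val ij).1 (val ij).2 = b ->
          phi (restr 0 U c) x' <= phi (restr 0 U c) y)
  (tau : {ffun PW [set: V] -> bool} -> {ffun PW [set: V] -> bool})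
  (htau : forall x, inXp xh x ->
     [/\ inXp xh (tau x),
         restr false (~: U) (tau x) = restr false (~: U) x &
         restr false U (tau x) = y])
  (lb ub ub' : R)
  (hlb : exists x, [/\ inXp (restr None U xh) x,
                      at_pair false x (val ij).1 (val ij).2 = b &
                      lb <= phi (restr 0 U c) x])
  (hub : forall x, inXp (restr None U xh) x ->
           at_pair false x (val ij).1 (val ij).2 = ~~ b ->
           phi (restr 0 U c) x <= ub)
  (hub' : forall x, inXp xh x -> x ij = ~~ b ->
           \sum_(pq : PW [set: V] | ((val pq).1 \in U) != ((val pq).2 \in U))
              c pq * ((x pq)%:R - (tau x pq)%:R) <= ub')
  (hgap : lb - ub >= ub') :
  exists xs, [/\ inXp xh xs,
                 (forall x, inXp xh x -> phi c x <= phi c xs) &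
                 xs ij = b].
Proof.
have [x0 hx0] := hxh.1.
have [xs [hxs hmax]] := @exists_max R _ (inXp xh) (phi c)
   (enum {ffun PW [set: V] -> bool}) (ex_intro2 _ _ x0 (mem_enum _ x0) hx0).
have hijU : inPW U (val ij) by rewrite /inPW hiU hjU; case/andP: (valP ij) => _ /andP[].
have hijU' : inPW U ((val ij).1, (val ij).2) by rewrite -surjective_pairing.
case: (boolP (xs ij == b)) => [/eqP e|ne].
  by exists xs; split=> // x hx; apply: hmax; rewrite ?mem_enum.
have e : xs ij = ~~ b by move: ne; case: (xs ij); case: (b).
set t := tau xs.
have [ht hout hin] := htau xs hxs.
have htij : t ij = b.
  by rewrite -(at_pair_val _ _ false _ t ij) -(at_pair_restr _ _ _ _ _ _ _ _ hijU') hin; case: hy => _ [].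
suff key : phi c xs <= phi c t.
  by exists t; split=> // x hx; apply: le_trans (hmax x (mem_enum _ x) hx) key.
suff : phi c xs - phi c t <= 0 by rewrite subr_le0.
have -> : phi c xs - phi c t = \sum_pq c pq * ((xs pq)%:R - (t pq)%:R).
  by rewrite /phi -sumrB; apply: eq_bigr => pq _; rewrite mulrBr.
rewrite (bigID (fun pq : PW [set: V] => ((val pq).1 \in U) != ((val pq).2 \in U))) /=.
rewrite [X in _ + X](bigID (fun pq : PW [set: V] => ((val pq).1 \in U))) /=.
rewrite [X in _ + (_ + X)]big1 ?addr0; last first.
  move=> pq /andP[hB hn].
  have hout' : inPW (~: U) (val pq).
    move: hB hn; case: pq => [[p q] hpq] /=; move: hpq.
    rewrite /inPW /= !inE => /andP[_ /andP[_ ->]].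
    by case: (p \in U); case: (q \in U).
  have hout'' : inPW (~: U) ((val pq).1, (val pq).2) by rewrite -surjective_pairing.
  suff -> : t pq = xs pq by rewrite subrr mulr0.
  by rewrite -(at_pair_val _ _ false _ t pq) -(at_pair_restr _ _ _ _ _ _ _ _ hout'') hout at_pair_restr // at_pair_val.
set G := fun pq : V * V => at_pair 0 c pq.1 pq.2 *
   ((at_pair false xs pq.1 pq.2)%:R - (at_pair false t pq.1 pq.2)%:R).
have -> : \sum_(pq : PW [set: V] | ~~ (((val pq).1 \in U) != ((val pq).2 \in U)) && ((val pq).1 \in U))
    c pq * ((xs pq)%:R - (t pq)%:R) = phi (restr 0 U c) (restr false U xs) - phi (restr 0 U c) y.
  rewrite (eq_bigr (fun pq => G (val pq))); last by move=> pq _; rewrite /G !at_pair_val.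
  rewrite (sumPW _ _ _ (fun pq => ~~ ((pq.1 \in U) != (pq.2 \in U)) && (pq.1 \in U)) G).
  rewrite /phi -sumrB -hin.
  set G' := fun pq : V * V => at_pair 0 (restr 0 U c) pq.1 pq.2 *
   ((at_pair false (restr false U xs) pq.1 pq.2)%:R - (at_pair false (restr false U t) pq.1 pq.2)%:R).
  rewrite (eq_bigr (fun pq => G' (val pq))); last by move=> pq _; rewrite /G' !at_pair_val mulrBr.
  rewrite (sumPW _ _ _ xpredT G').
  apply: eq_big => [[p q]|[p q]]; rewrite /inPW /= ?in_setT /=.
    by case: (p \in U); case: (q \in U); rewrite ?andbT ?andbF.
  move=> /and3P[npq /negPn /eqP e1 pU]; have qU : q \in U by rewrite -e1.
  have hpq : inPW U (p, q) by rewrite /inPW /= pU qU npq.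
  by rewrite /G /G' /= !at_pair_restr.
have h1 := hub' xs hxs e.
have h2 : phi (restr 0 U c) (restr false U xs) <= ub.
  apply: hub; first exact: inXp_restr.
  by rewrite at_pair_restr // at_pair_val e.
have [x1 [hx1 hx1b hlb1]] := hlb.
have h3 := hy.2.2 x1 hx1 hx1b.
move: h1 h2 h3 hlb1 hgap.
set A := \sum_(_ | _) _.
set B := phi _ (restr false U xs).
set C := phi _ y.
set D := phi _ x1.
move=> h1 h2 h3 h4 h5; lra.
Qed.
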